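(* Let $(L,\sqsubseteq)$ be a countably complete lattice, $F:L\to L$ monotone and $\omega$-cocontinuous, and $a\in L^\omega$ with $a_{n+1}\sqsubseteq a_n$ for all $n$. Define $c_m=\inf_{n\ge m}\sup_{k\ge n}F^k(a_k)$. Then $c_m\sqsubseteq F(c_m)$ for all $m\in\omega$. In particular, for every $\ell\in L$, $\inf_{n\in\omega}\sup_{k\ge n}F^k(\ell)$ is a postfixed point of $F$.
   Context: A countably complete lattice is a lattice in which every countable subset (including $\emptyset$) has a supremum and an infimum. $F$ is $\omega$-cocontinuous if $F(\inf_n c_n)=\inf_n F(c_n)$ for every descending chain $(c_n)$. $F^k$ is the $k$-fold iterate; a postfixed point is an $x$ with $x\sqsubseteq F(x)$. *)

(* Defs.v *)
From HB Require Import structures.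
From mathcomp Require Import all_boot all_order.
From mathcomp Require Import boolp classical_sets cardinality.
Set Implicit Arguments. Unset Strict Implicit. Unset Printing Implicit Defensive.
Import Order.Theory.
Local Open Scope classical_set_scope.

Section Defs.
Context {d : Order.disp_t} {L : porderType d}.

Definition is_ub (A : set L) (x : L) := forall y, A y -> (y <= x)%O.
Definition is_lb (A : set L) (x : L) := forall y, A y -> (x <= y)%O.
Definition is_lub (A : set L) (x : L) := is_ub A x /\ forall z, is_ub A z -> (x <= z)%O.
Definition is_glb (A : set L) (x : L) := is_lb A x /\ forall z, is_lb A z -> (z <= x)%O.

Definition countably_complete :=
  forall A : set L, countable A -> (exists x, is_lub A x) /\ (exists x, is_glb A x).

Definition omega_cocontinuous (F : L -> L) :=
  forall c : nat -> L, (forall n, (c n.+1 <= c n)%O) ->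
  forall x, is_glb (range c) x -> is_glb (range (F \o c)) (F x).
End Defs.

(* Main.v *)
Require Import Defs.
From HB Require Import structures.
From mathcomp Require Import all_boot all_order.
From mathcomp Require Import boolp classical_sets cardinality.
Local Open Scope classical_set_scope.
Import Order.Theory.

Section Aux.
Context (d : Order.disp_t) (L : latticeType d) (F : L -> L).
Hypothesis Fmon : {homo F : x y / (x <= y)%O}.
Hypothesis Fco : omega_cocontinuous F.

Lemma iter_mon j x y : (x <= y)%O -> (iter j F x <= iter j F y)%O.
Proof. elim: j => [//|j IH] /= H; apply: Fmon; exact: IH. Qed.

Lemma key (a : nat -> L) (s : nat -> L) (c : L) (m : nat) :
  (forall n, (a n.+1 <= a n)%O) ->
  (forall n, is_lub [set iter k F (a k) | k in [set k | (n <= k)%N]] (s n)) ->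
  is_glb (range (fun n => s (m + n)%N)) c -> (c <= F c)%O.
Proof.
move=> ad hs hc.
have santi : forall n n', (n <= n')%N -> (s n' <= s n)%O.
  move=> n n' le; apply: (proj2 (hs n')) => y [k /= hk <-].
  apply: (proj1 (hs n)); exists k => //=; exact: leq_trans le hk.
have ch : forall n, (s (m + n.+1)%N <= s (m + n)%N)%O.
  by move=> n; apply: santi; rewrite addnS.
have := Fco _ ch _ hc => -[_ glb]; apply: glb => y [n _ <-] /=.
apply: (@le_trans _ _ (s (m + n.+1)%N)).
  by apply: (proj1 hc); exists n.+1.
apply: (proj2 (hs _)) => z [k /= hk <-].
case: k hk => [|j]; first by rewrite addnS.
rewrite addnS ltnS => hj /=.
apply: Fmon; apply: (@le_trans _ _ (iter j F (a j))); first exact: iter_mon.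
by apply: (proj1 (hs _)); exists j.
Qed.
End Aux.

Theorem mainTheorem7 (d : Order.disp_t) (L : latticeType d) (F : L -> L)
    (a : nat -> L) :
  countably_complete (L := L) ->
  {homo F : x y / (x <= y)%O} ->
  omega_cocontinuous F ->
  (forall n, (a n.+1 <= a n)%O) ->
  (forall (s c : nat -> L),
      (forall n, is_lub [set iter k F (a k) | k in [set k | (n <= k)%N]] (s n)) ->
      (forall m, is_glb [set s n | n in [set n | (m <= n)%N]] (c m)) ->
      forall m, (c m <= F (c m))%O) /\
  (forall (l : L) (s : nat -> L) (c : L),
      (forall n, is_lub [set iter k F l | k in [set k | (n <= k)%N]] (s n)) ->
      is_glb (range s) c ->
      (c <= F c)%O).
Proof.
move=> _ Fmon Fco ad; split.
  move=> s c hs hc m; apply: (@key _ _ F Fmon Fco a s _ m ad hs).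
  have -> : range (fun n => s (m + n)%N) = [set s n | n in [set n | (m <= n)%N]].
    apply/seteqP; split => y.
      by move=> [n _ <-]; exists (m + n)%N => //=; rewrite leq_addr.
    move=> [n /= hn <-]; exists (n - m)%N => //; by rewrite subnKC.
  exact: hc.
move=> l s c hs hc.
apply: (@key _ _ F Fmon Fco (fun _ => l) s c 0%N) => //.
Qed.
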